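(* Let $\mathcal C$ be a braided monoidal category, $\mathcal C_0$ a full braided monoidal subcategory, $C$ a $\mathcal C_0$-generated coalgebra in $\mathcal C$, and $\omega:\mathcal C_0^C\to\mathcal C$ the forgetful functor. Then $\mathrm{Nat}_{\mathcal C_0}(\omega,\omega\otimes -):\mathcal C\to\mathrm{Set}$ is representable and $C\cong\mathrm{coend}_{\mathcal C_0}(\omega)$ as coalgebras in $\mathcal C$.
   Context: A coalgebra $C$ in $\mathcal C$ is $\mathcal C_0$-generated if (1) $C$ is the colimit in $\mathcal C$ of a diagram of objects $C_i\in\mathcal C_0$ with injections $\iota_i:C_i\to C$; (2) all $X\otimes\iota_i\otimes M$ ($X\in\mathcal C_0$, $M\in\mathcal C$) are monomorphisms; (3) each $C_i$ is a subcoalgebra of $C$ via $\iota_i$; (4) for every $C$-comodule $(P,\delta_P)$ with $P\in\mathcal C_0$ there are $i$ and $\delta_{P,i}:P\to P\otimes C_i$ with $(1\otimes\iota_i)\delta_{P,i}=\delta_P$. $\mathcal C_0^C$ is the category of $C$-comodules with underlying object in $\mathcal C_0$, a $\mathcal C_0$-category via $X\otimes(P,\delta)=(X\otimes P,1_X\otimes\delta)$. $\mathrm{Nat}_{\mathcal C_0}(\omega,\omega\otimes M)$ is the set of natural transformations $\varphi:\omega\to\omega\otimes M$ with $\varphi(X\otimes P)=1_X\otimes\varphi(P)$ for all $X\in\mathcal C_0$. $\mathrm{coend}_{\mathcal C_0}(\omega)$ is the representing object, with coalgebra structure determined by the universal morphism $\delta$ via $(1\otimes\Delta)\delta=(\delta\otimes1)\delta$,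 $(1\otimes\varepsilon)\delta=$ canonical isomorphism. *)

(* Defs.v *)
Set Implicit Arguments.
Unset Strict Implicit.

Record Category : Type := {
  ob : Type;
  hom : ob -> ob -> Type;
  idm : forall A : ob, hom A A;
  comp : forall A B C : ob, hom B C -> hom A B -> hom A C;
  comp_idl : forall A B (f : hom A B), comp (idm B) f = f;
  comp_idr : forall A B (f : hom A B), comp f (idm A) = f;
  comp_assoc : forall A B C D (h : hom C D) (g : hom B C) (f : hom A B),
      comp h (comp g f) = comp (comp h g) f }.

Arguments hom {c} _ _.
Arguments idm {c} _.
Arguments comp {c A B C} _ _.

Notation "g ∘ f" := (comp g f) (at level 40, left associativity).

Definition Mono (K : Category) (A B : ob K) (m : hom A B) : Prop :=
  forall (Z : ob K) (f g : hom Z A), m ∘ f = m ∘ g -> f = g.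

Record Functor (J K : Category) : Type := {
  fobj : ob J -> ob K;
  fmap : forall a b : ob J, hom a b -> hom (fobj a) (fobj b);
  fmap_id : forall a, fmap (idm a) = idm (fobj a);
  fmap_comp : forall a b c (g : hom b c) (f : hom a b),
      fmap (g ∘ f) = fmap g ∘ fmap f }.

Arguments fobj {J K} _ _.
Arguments fmap {J K} _ {a b} _.

Definition IsColimit (J K : Category) (D : Functor J K) (L : ob K)
    (iota : forall j : ob J, hom (fobj D j) L) : Prop :=
  (forall (a b : ob J) (u : hom a b), iota b ∘ fmap D u = iota a) /\
  (forall (Z : ob K) (f : forall j : ob J, hom (fobj D j) Z),
      (forall (a b : ob J) (u : hom a b), f b ∘ fmap D u = f a) ->
      exists! h : hom L Z, forall j, h ∘ iota j = f j).

Record BMData (K : Category) : Type := {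
  tens : ob K -> ob K -> ob K;
  tensm : forall A B A' B' : ob K, hom A A' -> hom B B' -> hom (tens A B) (tens A' B');
  munit : ob K;
  assoc : forall A B C : ob K, hom (tens (tens A B) C) (tens A (tens B C));
  associ : forall A B C : ob K, hom (tens A (tens B C)) (tens (tens A B) C);
  lu : forall A : ob K, hom (tens munit A) A;
  lui : forall A : ob K, hom A (tens munit A);
  ru : forall A : ob K, hom (tens A munit) A;
  rui : forall A : ob K, hom A (tens A munit);
  br : forall A B : ob K, hom (tens A B) (tens B A);
  bri : forall A B : ob K, hom (tens B A) (tens A B) }.

Arguments tens {K} _ _ _.
Arguments tensm {K} _ {A B A' B'} _ _.
Arguments munit {K} _.
Arguments assoc {K} _ _ _ _.
Arguments associ {K} _ _ _ _.
Arguments lu {K} _ _.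
Arguments lui {K} _ _.
Arguments ru {K} _ _.
Arguments rui {K} _ _.
Arguments br {K} _ _ _.
Arguments bri {K} _ _ _.

Record IsBraidedMonoidal (K : Category) (M : BMData K) : Prop := {
  tensm_id : forall A B : ob K, tensm M (idm A) (idm B) = idm (tens M A B);
  tensm_comp : forall (A B C A' B' C' : ob K) (f : hom A B) (g : hom B C)
      (f' : hom A' B') (g' : hom B' C'),
      tensm M (g ∘ f) (g' ∘ f') = tensm M g g' ∘ tensm M f f';
  assoc_iso1 : forall A B C, associ M A B C ∘ assoc M A B C = idm _;
  assoc_iso2 : forall A B C, assoc M A B C ∘ associ M A B C = idm _;
  assoc_nat : forall (A B C A' B' C' : ob K) (f : hom A A') (g : hom B B') (h : hom C C'),
      assoc M A' B' C' ∘ tensm M (tensm M f g) h = tensm M f (tensm M g h) ∘ assoc M A B C;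
  lu_iso1 : forall A, lui M A ∘ lu M A = idm _;
  lu_iso2 : forall A, lu M A ∘ lui M A = idm _;
  lu_nat : forall (A B : ob K) (f : hom A B), lu M B ∘ tensm M (idm (munit M)) f = f ∘ lu M A;
  ru_iso1 : forall A, rui M A ∘ ru M A = idm _;
  ru_iso2 : forall A, ru M A ∘ rui M A = idm _;
  ru_nat : forall (A B : ob K) (f : hom A B), ru M B ∘ tensm M f (idm (munit M)) = f ∘ ru M A;
  pentagon : forall A B C D : ob K,
      assoc M A B (tens M C D) ∘ assoc M (tens M A B) C D
      = tensm M (idm A) (assoc M B C D) ∘ (assoc M A (tens M B C) D ∘ tensm M (assoc M A B C) (idm D));
  triangle : forall A B : ob K,
      tensm M (idm A) (lu M B) ∘ assoc M A (munit M) B = tensm M (ru M A) (idm B);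
  br_iso1 : forall A B, bri M A B ∘ br M A B = idm _;
  br_iso2 : forall A B, br M A B ∘ bri M A B = idm _;
  br_nat : forall (A B A' B' : ob K) (f : hom A A') (g : hom B B'),
      br M A' B' ∘ tensm M f g = tensm M g f ∘ br M A B;
  hexagon1 : forall A B C : ob K,
      assoc M B C A ∘ (br M A (tens M B C) ∘ assoc M A B C)
      = tensm M (idm B) (br M A C) ∘ (assoc M B A C ∘ tensm M (br M A B) (idm C));
  hexagon2 : forall A B C : ob K,
      associ M C A B ∘ (br M (tens M A B) C ∘ associ M A B C)
      = tensm M (br M A C) (idm B) ∘ (associ M A C B ∘ tensm M (idm A) (br M B C)) }.

Definition FullMonoidalSub (K : Category) (M : BMData K) (C0 : ob K -> Prop) : Prop :=
  C0 (munit M) /\ (forall X Y, C0 X -> C0 Y -> C0 (tens M X Y)).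
Arguments FullMonoidalSub {K} M C0.

Definition IsCoalgebra (K : Category) (M : BMData K) (C : ob K)
    (Delta : hom C (tens M C C)) (eps : hom C (munit M)) : Prop :=
  assoc M C C C ∘ (tensm M Delta (idm C) ∘ Delta) = tensm M (idm C) Delta ∘ Delta /\
  lu M C ∘ (tensm M eps (idm C) ∘ Delta) = idm C /\
  ru M C ∘ (tensm M (idm C) eps ∘ Delta) = idm C.
Arguments IsCoalgebra {K} M {C} Delta eps.

Definition IsCoalgMorphism (K : Category) (M : BMData K) (C D : ob K)
    (DC : hom C (tens M C C)) (eC : hom C (munit M))
    (DD : hom D (tens M D D)) (eD : hom D (munit M)) (f : hom C D) : Prop :=
  tensm M f f ∘ DC = DD ∘ f /\ eD ∘ f = eC.
Arguments IsCoalgMorphism {K} M {C D} DC eC DD eD f.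

Definition IsComodule (K : Category) (M : BMData K) (C : ob K)
    (Delta : hom C (tens M C C)) (eps : hom C (munit M))
    (P : ob K) (delta : hom P (tens M P C)) : Prop :=
  assoc M P C C ∘ (tensm M delta (idm C) ∘ delta) = tensm M (idm P) Delta ∘ delta /\
  ru M P ∘ (tensm M (idm P) eps ∘ delta) = idm P.
Arguments IsComodule {K} M {C} Delta eps {P} delta.

Definition IsComodMap (K : Category) (M : BMData K) (C P Q : ob K)
    (dP : hom P (tens M P C)) (dQ : hom Q (tens M Q C)) (f : hom P Q) : Prop :=
  dQ ∘ f = tensm M f (idm C) ∘ dP.
Arguments IsComodMap {K} M {C P Q} dP dQ f.

Definition C0Generated (K : Category) (M : BMData K) (C0 : ob K -> Prop) (C : ob K)
    (Delta : hom C (tens M C C)) (eps : hom C (munit M)) : Prop :=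
  exists (J : Category) (D : Functor J K) (iota : forall j : ob J, hom (fobj D j) C),
    (forall j, C0 (fobj D j)) /\
    @IsColimit J K D C iota /\
    (forall (j : ob J) (X N : ob K), C0 X ->
        Mono (tensm M (tensm M (idm X) (iota j)) (idm N))) /\
    (forall j : ob J, exists (Dj : hom (fobj D j) (tens M (fobj D j) (fobj D j)))
                             (ej : hom (fobj D j) (munit M)),
        IsCoalgebra M Dj ej /\
        IsCoalgMorphism M Dj ej Delta eps (iota j)) /\
    (forall (P : ob K) (delta : hom P (tens M P C)),
        C0 P -> IsComodule M Delta eps delta ->
        exists (j : ob J) (dj : hom P (tens M P (fobj D j))),
          tensm M (idm P) (iota j) ∘ dj = delta).
Arguments C0Generated {K} M C0 {C} Delta eps.

(** A family indexed by the objects (P, delta) of C0^C (the proof arguments are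
    forced to be irrelevant by naturality along identities). *)
Definition NatFam (K : Category) (M : BMData K) (C0 : ob K -> Prop) (C : ob K)
    (Delta : hom C (tens M C C)) (eps : hom C (munit M)) (N : ob K) : Type :=
  forall (P : ob K) (delta : hom P (tens M P C)),
    IsComodule M Delta eps delta -> C0 P -> hom P (tens M P N).
Arguments NatFam {K} M C0 {C} Delta eps N.

Definition IsNatC0 (K : Category) (M : BMData K) (C0 : ob K -> Prop) (C : ob K)
    (Delta : hom C (tens M C C)) (eps : hom C (munit M)) (N : ob K)
    (phi : NatFam M C0 Delta eps N) : Prop :=
  (forall (P Q : ob K) (dP : hom P (tens M P C)) (dQ : hom Q (tens M Q C))
          (hP : IsComodule M Delta eps dP) (cP : C0 P)
          (hQ : IsComodule M Delta eps dQ) (cQ : C0 Q) (f : hom P Q),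
      IsComodMap M dP dQ f ->
      tensm M f (idm N) ∘ phi P dP hP cP = phi Q dQ hQ cQ ∘ f) /\
  (* C0-linearity: phi(X (x) P) = 1_X (x) phi(P), where X (x) (P, delta)
     is (X (x) P, 1_X (x) delta) (with the associator inserted) *)
  (forall (X P : ob K) (dP : hom P (tens M P C))
          (hP : IsComodule M Delta eps dP) (cP : C0 P) (cX : C0 X)
          (hXP : IsComodule M Delta eps (associ M X P C ∘ tensm M (idm X) dP))
          (cXP : C0 (tens M X P)),
      phi (tens M X P) (associ M X P C ∘ tensm M (idm X) dP) hXP cXP
      = associ M X P N ∘ tensm M (idm X) (phi P dP hP cP)).
Arguments IsNatC0 {K} M C0 {C} Delta eps {N} phi.

Definition RepresentsNatC0 (K : Category) (M : BMData K) (C0 : ob K -> Prop) (C : ob K)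
    (Delta : hom C (tens M C C)) (eps : hom C (munit M)) (E : ob K)
    (Theta : forall N : ob K, hom E N -> NatFam M C0 Delta eps N) : Prop :=
  (forall (N : ob K) (f : hom E N), IsNatC0 M C0 Delta eps (Theta N f)) /\
  (forall (N N' : ob K) (f : hom E N) (g : hom N N') P dP hP cP,
      Theta N' (g ∘ f) P dP hP cP = tensm M (idm P) g ∘ Theta N f P dP hP cP) /\
  (forall (N : ob K) (f f' : hom E N),
      (forall P dP hP cP, Theta N f P dP hP cP = Theta N f' P dP hP cP) -> f = f') /\
  (forall (N : ob K) (phi : NatFam M C0 Delta eps N), IsNatC0 M C0 Delta eps phi ->
      exists f : hom E N, forall P dP hP cP, Theta N f P dP hP cP = phi P dP hP cP).
Arguments RepresentsNatC0 {K} M C0 {C} Delta eps {E} Theta.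

Definition CoendCoalgStructure (K : Category) (M : BMData K) (C0 : ob K -> Prop) (C : ob K)
    (Delta : hom C (tens M C C)) (eps : hom C (munit M)) (E : ob K)
    (delta : NatFam M C0 Delta eps E)
    (DE : hom E (tens M E E)) (eE : hom E (munit M)) : Prop :=
  (forall P dP hP cP,
      tensm M (idm P) DE ∘ delta P dP hP cP
      = assoc M P E E ∘ (tensm M (delta P dP hP cP) (idm E) ∘ delta P dP hP cP)) /\
  (forall P dP hP cP,
      tensm M (idm P) eE ∘ delta P dP hP cP = rui M P).
Arguments CoendCoalgStructure {K} M C0 {C} Delta eps {E} delta DE eE.

Definition CoalgIso (K : Category) (M : BMData K) (C D : ob K)
    (DC : hom C (tens M C C)) (eC : hom C (munit M))
    (DD : hom D (tens M D D)) (eD : hom D (munit M)) : Prop :=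
  exists (f : hom C D) (g : hom D C),
    g ∘ f = idm C /\ f ∘ g = idm D /\ IsCoalgMorphism M DC eC DD eD f.
Arguments CoalgIso {K} M {C D} DC eC DD eD.

(* Main.v *)
Require Import Defs.
From Stdlib Require Import Setoid ClassicalEpsilon.
Set Implicit Arguments.
Unset Strict Implicit.

Section S.
Variable K : Category.
Variable M : BMData K.
Hypothesis HM : IsBraidedMonoidal M.
Local Notation "f ⊗ g" := (tensm M f g) (at level 33, left associativity).
Local Notation I := (munit M).

Ltac ra := repeat rewrite <- comp_assoc.

Lemma TC (A B C A' B' C' : ob K) (f : hom A B) (g : hom B C) (f' : hom A' B') (g' : hom B' C') :
  (g ⊗ g') ∘ (f ⊗ f') = (g ∘ f) ⊗ (g' ∘ f').
Proof. symmetry; apply (tensm_comp HM). Qed.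
Lemma TCr (X A B C A' B' C' : ob K) (f : hom A B) (g : hom B C) (f' : hom A' B') (g' : hom B' C') (x : hom X _) :
  (g ⊗ g') ∘ ((f ⊗ f') ∘ x) = ((g ∘ f) ⊗ (g' ∘ f')) ∘ x.
Proof. rewrite comp_assoc, TC; reflexivity. Qed.
Lemma Tid (A B : ob K) : idm A ⊗ idm B = idm _.
Proof. apply (tensm_id HM). Qed.

Ltac tc := ra; repeat (rewrite ?TC, ?TCr); rewrite ?comp_idl, ?comp_idr, ?Tid, ?comp_idl, ?comp_idr; ra.

Lemma split1 (A B A' B' : ob K) (f : hom A A') (g : hom B B') : f ⊗ g = (f ⊗ idm _) ∘ (idm _ ⊗ g).
Proof. rewrite TC, comp_idl, comp_idr; reflexivity. Qed.
Lemma split2 (A B A' B' : ob K) (f : hom A A') (g : hom B B') : f ⊗ g = (idm _ ⊗ g) ∘ (f ⊗ idm _).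
Proof. rewrite TC, comp_idl, comp_idr; reflexivity. Qed.

Lemma rcancel (A B : ob K) (i : hom A B) (j : hom B A) (Z : ob K) (f g : hom B Z) :
  j ∘ i = idm A -> i ∘ j = idm B -> f ∘ i = g ∘ i -> f = g.
Proof. intros _ H2 H. rewrite <- (comp_idr f), <- (comp_idr g), <- H2, !comp_assoc, H; reflexivity. Qed.
Lemma lcancel (A B : ob K) (i : hom A B) (j : hom B A) (Z : ob K) (f g : hom Z A) :
  j ∘ i = idm A -> i ∘ f = i ∘ g -> f = g.
Proof. intros H1 H. rewrite <- (comp_idl f), <- (comp_idl g), <- H1, <- !comp_assoc, H; reflexivity. Qed.

Lemma associ_nat (A B C A' B' C' : ob K) (f : hom A A') (g : hom B B') (h : hom C C') :
  associ M A' B' C' ∘ (f ⊗ (g ⊗ h)) = ((f ⊗ g) ⊗ h) ∘ associ M A B C.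
Proof.
  apply (rcancel (i := assoc M A B C) (j := associ M A B C)); [apply (assoc_iso1 HM) | apply (assoc_iso2 HM) |].
  rewrite <- comp_assoc, <- (assoc_nat HM), comp_assoc, (assoc_iso1 HM), comp_idl.
  rewrite <- comp_assoc, (assoc_iso1 HM), comp_idr. reflexivity.
Qed.

Lemma tens_I_cancel (A B : ob K) (f g : hom A B) : f ⊗ idm I = g ⊗ idm I -> f = g.
Proof.
  intro H.
  assert (E: forall h : hom A B, h = ru M B ∘ (h ⊗ idm I) ∘ rui M A).
  { intro h. rewrite (ru_nat HM), <- comp_assoc, (ru_iso2 HM), comp_idr. reflexivity. }
  rewrite (E f), (E g), H. reflexivity.
Qed.

Lemma ru_assoc (A B : ob K) : (idm A ⊗ ru M B) ∘ assoc M A B I = ru M (tens M A B).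
Proof.
  apply tens_I_cancel.
  apply (lcancel (i := assoc M A B I) (j := associ M A B I)); [apply (assoc_iso1 HM)|].
  rewrite <- (triangle HM (tens M A B) I).
  rewrite <- (Tid A B).
  rewrite comp_assoc, (assoc_nat HM).
  rewrite <- comp_assoc, (pentagon HM A B I I).
  rewrite comp_assoc, TC, comp_assoc, (triangle HM).
  rewrite comp_idl, <- (assoc_nat HM), <- comp_assoc, TC, comp_idl. reflexivity.
Qed.

Lemma associ_nat_r (X A B C A' B' C' : ob K) (f : hom A A') (g : hom B B') (h : hom C C') (x : hom X _) :
  associ M A' B' C' ∘ ((f ⊗ (g ⊗ h)) ∘ x) = ((f ⊗ g) ⊗ h) ∘ (associ M A B C ∘ x).
Proof. rewrite !comp_assoc, associ_nat; reflexivity. Qed.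
Lemma assoc_nat_r (X A B C A' B' C' : ob K) (f : hom A A') (g : hom B B') (h : hom C C') (x : hom X _) :
  assoc M A' B' C' ∘ (((f ⊗ g) ⊗ h) ∘ x) = (f ⊗ (g ⊗ h)) ∘ (assoc M A B C ∘ x).
Proof. rewrite !comp_assoc, (assoc_nat HM); reflexivity. Qed.

Lemma ru_associ (A B : ob K) : ru M (tens M A B) ∘ associ M A B I = idm A ⊗ ru M B.
Proof.
  rewrite <- ru_assoc, <- comp_assoc, (assoc_iso2 HM), comp_idr. reflexivity.
Qed.
Lemma ru_associ_r (X A B : ob K) (x : hom X _) : ru M (tens M A B) ∘ (associ M A B I ∘ x) = (idm A ⊗ ru M B) ∘ x.
Proof. rewrite comp_assoc, ru_associ; reflexivity. Qed.

Lemma tri_i (P N : ob K) : (ru M P ⊗ idm N) ∘ associ M P I N = idm P ⊗ lu M N.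
Proof.
  rewrite <- (triangle HM), <- comp_assoc, (assoc_iso2 HM), comp_idr. reflexivity.
Qed.
Lemma tri_i_r (X P N : ob K) (x : hom X _) : (ru M P ⊗ idm N) ∘ (associ M P I N ∘ x) = (idm P ⊗ lu M N) ∘ x.
Proof. rewrite comp_assoc, tri_i; reflexivity. Qed.

Lemma pent_i_r (Z X P C : ob K) (x : hom Z _) :
  assoc M (tens M X P) C C ∘ ((associ M X P C ⊗ idm C) ∘ (associ M X (tens M P C) C ∘ x))
  = associ M X P (tens M C C) ∘ ((idm X ⊗ assoc M P C C) ∘ x).
Proof.
  apply (lcancel (i := assoc M X P (tens M C C)) (j := associ M X P (tens M C C))); [apply (assoc_iso1 HM)|].
  rewrite (comp_assoc (assoc M X P (tens M C C)) (associ M X P (tens M C C))), (assoc_iso2 HM), comp_idl.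
  rewrite comp_assoc, (pentagon HM). ra.
  rewrite TCr, (assoc_iso2 HM), comp_idl, Tid, comp_idl.
  rewrite (comp_assoc (assoc M X (tens M P C) C)), (assoc_iso2 HM), comp_idl. reflexivity.
Qed.

Lemma lui_nat (A B : ob K) (f : hom A B) : lui M B ∘ f = (idm I ⊗ f) ∘ lui M A.
Proof.
  apply (lcancel (i := lu M B) (j := lui M B)); [apply (lu_iso1 HM)|].
  rewrite comp_assoc, (lu_iso2 HM), comp_idl, comp_assoc, (lu_nat HM), <- comp_assoc, (lu_iso2 HM), comp_idr.
  reflexivity.
Qed.

Section Co.
Variables (C : ob K) (Delta : hom C (tens M C C)) (eps : hom C I).
Hypothesis Hcoalg : IsCoalgebra M Delta eps.

Lemma comod_tens (X P : ob K) (dP : hom P (tens M P C)) :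
  IsComodule M Delta eps dP -> IsComodule M Delta eps (associ M X P C ∘ (idm X ⊗ dP)).
Proof.
  intros [H1 H2]. split.
  - rewrite <- (Tid X P). ra.
    rewrite <- associ_nat_r.
    rewrite (split2 (associ M X P C ∘ (idm X ⊗ dP)) (idm C)), Tid, comp_idl.
    rewrite TC, comp_idl. rewrite <- (comp_idr (idm C)) at 1.
    rewrite <- TC. ra.
    rewrite <- associ_nat_r. rewrite pent_i_r. tc.
    ra. rewrite H1. reflexivity.
  - rewrite <- (Tid X P). ra.
    rewrite <- associ_nat_r, ru_associ_r. tc. rewrite H2, Tid. reflexivity.
Qed.

Lemma Tr (A B C' D : ob K) (f : hom A B) (g : hom B C') : idm D ⊗ (g ∘ f) = (idm D ⊗ g) ∘ (idm D ⊗ f).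
Proof. rewrite TC, comp_idl. reflexivity. Qed.
Lemma lu_nat_r (X A B : ob K) (f : hom A B) (x : hom X _) : lu M B ∘ ((idm I ⊗ f) ∘ x) = f ∘ (lu M A ∘ x).
Proof. rewrite !comp_assoc, (lu_nat HM). reflexivity. Qed.

Lemma comod_sub (Cj : ob K) (i : hom Cj C) (Dj : hom Cj (tens M Cj Cj)) (ej : hom Cj I) :
  IsCoalgebra M Dj ej -> IsCoalgMorphism M Dj ej Delta eps i ->
  IsComodule M Delta eps ((idm Cj ⊗ i) ∘ Dj).
Proof.
  intros [H1 [H2 H3]] [G1 G2]. split.
  - transitivity (assoc M Cj C C ∘ (((idm _ ⊗ i) ⊗ i) ∘ ((Dj ⊗ idm _) ∘ Dj))).
    { tc. reflexivity. }
    rewrite assoc_nat_r, H1. tc. rewrite G1. reflexivity.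
  - tc. rewrite G2, H3. reflexivity.
Qed.

Lemma extract (Cj N : ob K) (Dj : hom Cj (tens M Cj Cj)) (ej : hom Cj I) (g : hom Cj N) :
  IsCoalgebra M Dj ej -> lu M N ∘ ((ej ⊗ idm N) ∘ ((idm Cj ⊗ g) ∘ Dj)) = g.
Proof.
  intros [H1 [H2 H3]]. tc. rewrite (split2 ej g). ra. rewrite lu_nat_r, H2, comp_idr. reflexivity.
Qed.

Variable C0 : ob K -> Prop.
Hypothesis HC0 : FullMonoidalSub M C0.
Hypothesis Hgen : C0Generated M C0 Delta eps.

Definition ThetaC (N : ob K) (f : hom C N) : NatFam M C0 Delta eps N :=
  fun P dP _ _ => (idm P ⊗ f) ∘ dP.

Lemma ThetaC_nat N (f : hom C N) : IsNatC0 M C0 Delta eps (ThetaC f).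
Proof.
  unfold ThetaC. split.
  - intros P Q dP dQ hP cP hQ cQ g Hg. unfold IsComodMap in Hg.
    ra. rewrite Hg. tc. reflexivity.
  - intros X P dP hP cP cX hXP cXP. rewrite <- (Tid X P). ra. rewrite <- associ_nat_r. tc. reflexivity.
Qed.

Lemma inj_C N (f f' : hom C N) :
  (forall P dP (hP : IsComodule M Delta eps dP) (cP : C0 P), (idm P ⊗ f) ∘ dP = (idm P ⊗ f') ∘ dP) -> f = f'.
Proof.
  intro H.
  destruct Hgen as [J [D [iota [HC0j [[Hcoc Huniq] [Hmono [Hsub Hfac]]]]]]].
  assert (Hj: forall j, f ∘ iota j = f' ∘ iota j).
  { intro j. destruct (Hsub j) as [Dj [ej [Hcj Hmj]]].
    pose proof (H _ _ (comod_sub Hcj Hmj) (HC0j j)) as E.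
    rewrite <- (extract (f ∘ iota j) Hcj), <- (extract (f' ∘ iota j) Hcj).
    rewrite !Tr. ra. rewrite E. reflexivity. }
  destruct (Huniq N (fun j => f ∘ iota j)) as [h [Hh Hu]].
  { intros a b u. rewrite <- comp_assoc, Hcoc. reflexivity. }
  transitivity h; [symmetry|]; apply Hu; intro j; [reflexivity| symmetry; apply Hj].
Qed.

Lemma assoc_iso1_r (X A B C' : ob K) (x : hom X _) : associ M A B C' ∘ (assoc M A B C' ∘ x) = x.
Proof. rewrite comp_assoc, (assoc_iso1 HM), comp_idl. reflexivity. Qed.

Lemma surj_C N (phi : NatFam M C0 Delta eps N) : IsNatC0 M C0 Delta eps phi ->
  exists f : hom C N, forall P dP hP cP, (idm P ⊗ f) ∘ dP = phi P dP hP cP.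
Proof.
  intros [Hnat Hlin].
  destruct Hgen as [J [D [iota [HC0j [[Hcoc Huniq] [Hmono [Hsub Hfac]]]]]]].
  assert (HS: forall j, {Dj : _ & {ej : _ | IsCoalgebra M Dj ej /\ IsCoalgMorphism M Dj ej Delta eps (iota j)}}).
  { intro j. destruct (constructive_indefinite_description _ (Hsub j)) as [Dj HDj].
    destruct (constructive_indefinite_description _ HDj) as [ej Hej]. exists Dj, ej; exact Hej. }
  set (Dj := fun j => projT1 (HS j)).
  set (ej := fun j => proj1_sig (projT2 (HS j))).
  assert (Hj : forall j, IsCoalgebra M (Dj j) (ej j) /\ IsCoalgMorphism M (Dj j) (ej j) Delta eps (iota j)).
  { intro j. exact (proj2_sig (projT2 (HS j))). }
  clearbody Dj ej.
  set (hj := fun j => comod_sub (proj1 (Hj j)) (proj2 (Hj j))).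
  set (fj := fun j => lu M N ∘ ((ej j ⊗ idm N) ∘ phi _ _ (hj j) (HC0j j))).
  assert (Hmi : forall j, Mono (iota j ⊗ idm C)).
  { intros j Z g g' E.
    apply (lcancel (i := lui M (fobj D j) ⊗ idm C) (j := lu M (fobj D j) ⊗ idm C)).
    { rewrite TC, (lu_iso2 HM), comp_idl, Tid. reflexivity. }
    apply (Hmono j I C (proj1 HC0)).
    assert (L : forall x : hom Z _, ((idm I ⊗ iota j) ⊗ idm C) ∘ ((lui M _ ⊗ idm C) ∘ x)
        = (lui M _ ⊗ idm C) ∘ ((iota j ⊗ idm C) ∘ x)).
    { intro x. tc. rewrite lui_nat. reflexivity. }
    ra. rewrite !L, E. reflexivity. }
  destruct (Huniq N fj) as [h [Hh Hu]].
  { intros a b u.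
    assert (Hm : IsComodMap M ((idm _ ⊗ iota a) ∘ Dj a) ((idm _ ⊗ iota b) ∘ Dj b) (fmap D u)).
    { unfold IsComodMap. apply (Hmi b).
      destruct (Hj a) as [_ [Ga1 Ga2]]. destruct (Hj b) as [_ [Gb1 Gb2]].
      tc. rewrite comp_assoc, Gb1, <- comp_assoc, Hcoc, Ga1. reflexivity. }
    pose proof (Hnat _ _ _ _ (hj a) (HC0j a) (hj b) (HC0j b) _ Hm) as E.
    unfold fj. ra. rewrite <- E. tc.
    destruct (Hj a) as [_ [_ Ga2]]. destruct (Hj b) as [_ [_ Gb2]].
    rewrite <- Gb2, <- comp_assoc, Hcoc, Ga2. reflexivity. }
  exists h. intros P dP hP cP.
  destruct (Hfac P dP cP hP) as [j [dj Hdj]].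
  transitivity ((idm P ⊗ fj j) ∘ dj).
  { rewrite <- Hh, <- Hdj. tc. reflexivity. }
  destruct (Hj j) as [[Hc1 [Hc2 Hc3]] [Hm1 Hm2]].
  pose proof hP as [HP1 HP2].
  assert (Hcu : ru M P ∘ ((idm P ⊗ ej j) ∘ dj) = idm P).
  { transitivity (ru M P ∘ ((idm P ⊗ eps) ∘ dP)); [| exact HP2]. rewrite <- Hdj. tc. rewrite Hm2. reflexivity. }
  assert (Hdm : IsComodMap M dP (associ M P _ C ∘ (idm P ⊗ ((idm _ ⊗ iota j) ∘ Dj j))) dj).
  { unfold IsComodMap. apply (Hmono j P C cP).
    transitivity ((dP ⊗ idm C) ∘ dP).
    - ra. rewrite <- associ_nat_r. tc. rewrite Hm1, Tr. ra. rewrite Hdj, <- HP1, assoc_iso1_r. reflexivity.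
    - tc. rewrite Hdj. reflexivity. }
  pose proof (comod_tens P hP) as hXP.
  pose proof (comod_tens P (hj j)) as hXPj.
  pose proof ((proj2 HC0) _ _ cP (HC0j j)) as cXP.
  pose proof (Hnat _ _ _ _ hP cP hXPj cXP _ Hdm) as E1.
  pose proof (Hlin P _ _ (hj j) (HC0j j) cP hXPj cXP) as E2.
  transitivity (((ru M P ∘ ((idm P ⊗ ej j) ∘ dj)) ⊗ idm N) ∘ phi P dP hP cP).
  2: { rewrite Hcu, Tid, comp_idl. reflexivity. }
  transitivity ((ru M P ⊗ idm N) ∘ (((idm P ⊗ ej j) ⊗ idm N) ∘ ((dj ⊗ idm N) ∘ phi P dP hP cP))).
  2: { tc. reflexivity. }
  rewrite E1, E2. ra. rewrite <- associ_nat_r, tri_i_r. unfold fj. tc. reflexivity.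
Qed.

Lemma ru_nat_r (X A B : ob K) (f : hom A B) (x : hom X _) : ru M B ∘ ((f ⊗ idm I) ∘ x) = f ∘ (ru M A ∘ x).
Proof. rewrite !comp_assoc, (ru_nat HM). reflexivity. Qed.

Lemma repC : RepresentsNatC0 M C0 Delta eps ThetaC.
Proof.
  split; [|split; [|split]].
  - intros; apply ThetaC_nat.
  - intros. unfold ThetaC. tc. reflexivity.
  - intros N f f' H. apply inj_C. exact H.
  - intros N phi Hphi. destruct (surj_C Hphi) as [f Hf]. exists f. exact Hf.
Qed.

Lemma part2 (E : ob K) (Theta : forall N : ob K, hom E N -> NatFam M C0 Delta eps N) :
  RepresentsNatC0 M C0 Delta eps Theta ->
      (exists (DE : hom E (tens M E E)) (eE : hom E (munit M)),
          CoendCoalgStructure M C0 Delta eps (Theta E (idm E)) DE eE) /\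
      (forall (DE : hom E (tens M E E)) (eE : hom E (munit M)),
          CoendCoalgStructure M C0 Delta eps (Theta E (idm E)) DE eE ->
          IsCoalgebra M DE eE /\ CoalgIso M Delta eps DE eE).
Proof.
  intros [R1 [R2 [R3 R4]]].
  assert (Tf : forall N (f : hom E N) P dP hP cP,
             Theta N f P dP hP cP = (idm P ⊗ f) ∘ Theta E (idm E) P dP hP cP).
  { intros. rewrite <- R2, comp_idr. reflexivity. }
  destruct (surj_C (R1 E (idm E))) as [a Ha].
  destruct (R4 C (ThetaC (idm C)) (ThetaC_nat _)) as [b Hb].
  unfold ThetaC in Hb.
  assert (Hb' : forall P dP hP cP, (idm P ⊗ b) ∘ Theta E (idm E) P dP hP cP = dP).
  { intros. rewrite <- Tf, Hb, Tid, comp_idl. reflexivity. }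
  assert (Hba : b ∘ a = idm C).
  { apply inj_C. intros. rewrite Tr, <- comp_assoc, (Ha P dP hP cP), Hb'. rewrite Tid, comp_idl. reflexivity. }
  assert (Hab : a ∘ b = idm E).
  { apply R3. intros. rewrite (Tf E (a ∘ b)), Tr, <- comp_assoc, Hb', (Ha P dP hP cP). reflexivity. }
  destruct Hcoalg as [C1 [C2 C3]].
  assert (K1 : forall P dP (hP : IsComodule M Delta eps dP) cP,
     (idm P ⊗ ((a ⊗ a) ∘ Delta)) ∘ dP
     = assoc M P E E ∘ ((Theta E (idm E) P dP hP cP ⊗ idm E) ∘ Theta E (idm E) P dP hP cP)).
  { intros. rewrite <- !(Ha P dP hP cP). destruct hP as [HP1 HP2].
    transitivity (assoc M P E E ∘ (((idm P ⊗ a) ⊗ a) ∘ ((dP ⊗ idm C) ∘ dP))); [| tc; reflexivity].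
    rewrite assoc_nat_r, HP1. tc. reflexivity. }
  assert (K2 : forall P dP (hP : IsComodule M Delta eps dP), (idm P ⊗ eps) ∘ dP = rui M P).
  { intros P dP [HP1 HP2]. apply (lcancel (i := ru M P) (j := rui M P)); [apply (ru_iso1 HM)|].
    rewrite HP2, (ru_iso2 HM). reflexivity. }
  split.
  - exists ((a ⊗ a) ∘ (Delta ∘ b)), (eps ∘ b). split.
    + intros. rewrite <- K1.
      transitivity ((idm P ⊗ ((a ⊗ a) ∘ Delta)) ∘ ((idm P ⊗ b) ∘ Theta E (idm E) P dP hP cP)); [tc; reflexivity|].
      rewrite Hb'. reflexivity.
    + intros. rewrite Tr, <- comp_assoc, Hb'. apply K2; assumption.
  - intros DE eE [S1 S2].
    assert (Hma : (a ⊗ a) ∘ Delta = DE ∘ a).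
    { apply inj_C. intros. rewrite (K1 P dP hP cP), Tr, <- comp_assoc, (Ha P dP hP cP), S1. reflexivity. }
    assert (Hea : eE ∘ a = eps).
    { apply inj_C. intros. rewrite Tr, <- comp_assoc, (Ha P dP hP cP), S2, (K2 P dP hP). reflexivity. }
    assert (HDE : DE = (a ⊗ a) ∘ (Delta ∘ b)).
    { rewrite comp_assoc, Hma, <- comp_assoc, Hab, comp_idr. reflexivity. }
    assert (HeE : eE = eps ∘ b).
    { rewrite <- Hea, <- comp_assoc, Hab, comp_idr. reflexivity. }
    split.
    + subst DE eE.
      assert (C1r : forall X (x : hom X C), assoc M C C C ∘ ((Delta ⊗ idm C) ∘ (Delta ∘ x)) = (idm C ⊗ Delta) ∘ (Delta ∘ x)).
      { intros. rewrite (comp_assoc _ Delta x), comp_assoc, C1, <- comp_assoc. reflexivity. }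
      assert (C2r : forall X (x : hom X C), lu M C ∘ ((eps ⊗ idm C) ∘ (Delta ∘ x)) = x).
      { intros. rewrite (comp_assoc _ Delta x), comp_assoc, C2, comp_idl. reflexivity. }
      assert (C3r : forall X (x : hom X C), ru M C ∘ ((idm C ⊗ eps) ∘ (Delta ∘ x)) = x).
      { intros. rewrite (comp_assoc _ Delta x), comp_assoc, C3, comp_idl. reflexivity. }
      split; [|split].
      * transitivity (assoc M E E E ∘ (((a ⊗ a) ⊗ a) ∘ ((Delta ⊗ idm C) ∘ (Delta ∘ b)))).
        { tc. rewrite ?Hba, ?comp_idr. tc. reflexivity. }
        rewrite assoc_nat_r, C1r. tc. rewrite ?Hba, ?comp_idr. tc. reflexivity.
      * tc. rewrite ?Hba, ?comp_idr. rewrite (split2 eps a). ra. rewrite lu_nat_r, C2r, Hab. reflexivity.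
      * tc. rewrite ?Hba, ?comp_idr. rewrite (split1 a eps). ra. rewrite ru_nat_r, C3r, Hab. reflexivity.
    + exists a, b. split; [exact Hba|split; [exact Hab|]]. split; [exact Hma | exact Hea].
Qed.
End Co.
End S.

Theorem corollary4p3 (K : Category) (M : BMData K) (HM : IsBraidedMonoidal M)
    (C0 : ob K -> Prop) (HC0 : FullMonoidalSub M C0)
    (C : ob K) (Delta : hom C (tens M C C)) (eps : hom C (munit M))
    (Hcoalg : IsCoalgebra M Delta eps)
    (Hgen : C0Generated M C0 Delta eps) :
  (exists (E : ob K) (Theta : forall N : ob K, hom E N -> NatFam M C0 Delta eps N),
      RepresentsNatC0 M C0 Delta eps Theta) /\
  (forall (E : ob K) (Theta : forall N : ob K, hom E N -> NatFam M C0 Delta eps N),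
      RepresentsNatC0 M C0 Delta eps Theta ->
      (exists (DE : hom E (tens M E E)) (eE : hom E (munit M)),
          CoendCoalgStructure M C0 Delta eps (Theta E (idm E)) DE eE) /\
      (forall (DE : hom E (tens M E E)) (eE : hom E (munit M)),
          CoendCoalgStructure M C0 Delta eps (Theta E (idm E)) DE eE ->
          IsCoalgebra M DE eE /\ CoalgIso M Delta eps DE eE)).
Proof.
  split.
  - exists C, (@ThetaC K M C Delta eps C0). apply repC; assumption.
  - intros E Theta HR. apply part2; assumption.
Qed.
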